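(* Let $\mathcal{X}=\mathbb{R}^d$ be the instance space and let $h:\mathcal{X}\to\{0,1\}$ be a fixed (oracle) instance-labeling function. For a finite bag (set) of instances $B\subset\mathcal{X}$, define the oracle bag label $\phi^*(B)=\max_{\mathbf{z}\in B} h(\mathbf{z})$ (the Boolean OR of the instance labels, with $\phi^*(\emptyset)=0$). Let $X$ be a random bag, and let $Y=\phi^*(X)$ be its label. Fix a candidate instance $\mathbf{x}\in\mathcal{X}$. Let $T\in\{0,1\}$ be a treatment indicator independent of $X$ with $0<P(T=1)<1$, and define the post-treatment label $$Y^*=\begin{cases}\phi^*(X\cup\{\mathbf{x}\}) & \text{if } T=1,\\ \phi^*(X\setminus\{\mathbf{x}\}) & \text{if } T=0.\end{cases}$$ Define the causal effect $\tau(\mathbf{x})=\mathbb{E}[Y^*\mid T=1]-\mathbb{E}[Y^*\mid T=0]$. Then $$\tau(\mathbf{x}) = P(Y=0)\cdot \mathbb{E}[Y^*\mid Y=0,\,T=1] + c,$$ where $c$ is the probability that the bag $X$ contains one and only one positive instance and that instance is $\mathbf{x}$, i.e. $c=P\big(\mathbf{x}\in X,\ h(\mathbf{x})=1,\ h(\mathbf{z})=0 \text{ for all } \mathbf{z}\in X\setminus\{\mathbf{x}\}\big)$.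
   Context: Multi-instance learning setting under the standard multi-instance assumption: a bag is positive (label 1) iff at least one of its instances is positive, and negative iff all instances are negative. ''Adding $\mathbf{x}$ to a bag'' is regarded as the treatment ($T=1$) and ''removing $\mathbf{x}$ from (or not including it in) a bag'' as the control ($T=0$); $Y^*$ is the bag label after treatment as given by the oracle classifier $\phi^*$. The term $P(Y=0)\cdot\mathbb{E}[Y^*\mid Y=0,T=1]$ is interpreted as $0$ when $P(Y=0)=0$. *)

(* Defs.v *)
From HB Require Import structures.
From mathcomp Require Import all_boot all_order all_algebra.
From mathcomp Require Import finmap.
From mathcomp Require Import all_classical all_reals all_analysis.
Set Implicit Arguments. Unset Strict Implicit. Unset Printing Implicit Defensive.
Import Order.TTheory GRing.Theory Num.Theory.
Local Open Scope classical_set_scope.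
Local Open Scope ring_scope.

Section MIL.
Context (R : realType) (n : nat).
Notation V := 'rV[R]_n.

Definition phi_star (h : V -> bool) (B : {fset V}) : bool :=
  has h (enum_fset B).

Context (dT : measure_display) (Om : measurableType dT) (P : probability Om R).

Definition pr (A : set Om) : R := fine (P A).

(* E[Z | A] for a {0,1}-valued random variable Z (Z = 1 iff the boolean is true);
   with the MathComp convention x / 0 = 0 it is 0 when P(A) = 0 *)
Definition condE01 (Z : Om -> bool) (A : set Om) : R :=
  pr (A `&` [set w | Z w]) / pr A.

Definition indep_bag_event (X : Om -> {fset V}) (A : set Om) : Prop :=
  forall S : set {fset V}, measurable (X @^-1` S) ->
    P (X @^-1` S `&` A) = (P (X @^-1` S) * P A)%E.

Definition Ystar (h : V -> bool) (X : Om -> {fset V}) (T : Om -> bool) (x : V)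
  (w : Om) : bool :=
  if T w then phi_star h (X w `|` [fset x])%fset
  else phi_star h (X w `\ x)%fset.

Definition tau (h : V -> bool) (X : Om -> {fset V}) (T : Om -> bool) (x : V) : R :=
  condE01 (Ystar h X T x) [set w | T w] - condE01 (Ystar h X T x) [set w | ~~ T w].

Definition c_event (h : V -> bool) (X : Om -> {fset V}) (x : V) : set Om :=
  [set w | [/\ x \in X w, h x & forall z, z \in X w -> z != x -> ~~ h z]].

End MIL.

(* Main.v *)
Require Import Defs.
From HB Require Import structures.
From mathcomp Require Import all_boot all_order all_algebra.
From mathcomp Require Import finmap.
From mathcomp Require Import all_classical all_reals all_analysis.
From mathcomp Require Import ring lra.
Import Order.TTheory GRing.Theory Num.Theory.
Local Open Scope classical_set_scope.
Local Open Scope ring_scope.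

Section Aux.
Context (R : realType) (dT : measure_display) (Om : measurableType dT) (P : probability Om R).

Lemma pr_split (A B : set Om) : measurable A -> measurable B ->
  pr P A = pr P (A `&` B) + pr P (A `&` ~` B).
Proof.
move=> mA mB.
rewrite /pr -fineD; first last.
- apply: fin_num_measure; exact: measurableI (measurableC mB).
- apply: fin_num_measure; exact: measurableI.
rewrite -measureU.
- by rewrite -setIUr setUCr setIT.
- exact: measurableI.
- exact: measurableI (measurableC mB).
- by rewrite setIACA setICr setI0.
Qed.

Lemma pr_ge0 (A : set Om) : 0 <= pr P A.
Proof. by apply: fine_ge0. Qed.

Lemma pr_indep (A B : set Om) : measurable A -> measurable B ->
  P (A `&` B) = (P A * P B)%E -> pr P (A `&` B) = pr P A * pr P B.
Proof.
move=> mA mB E; rewrite /pr E fineM //; exact: fin_num_measure.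
Qed.

Lemma pr_setT : pr P setT = 1.
Proof. by rewrite /pr probability_setT. Qed.
End Aux.
Arguments pr_split {R dT Om} P {A B}.
Arguments pr_ge0 {R dT Om} P A.
Arguments pr_indep {R dT Om} P {A B}.


Lemma phi_mono (R : realType) (d : nat) (h : 'rV[R]_d -> bool) (B C : {fset 'rV[R]_d}) :
  (B `<=` C)%fset -> phi_star h B -> phi_star h C.
Proof.
move=> /fsubsetP BC /hasP [z zB hz]; apply/hasP; exists z => //; exact: BC.
Qed.

Theorem theorem1 (R : realType) (d : nat) (dT : measure_display)
  (Om : measurableType dT) (P : probability Om R)
  (h : 'rV[R]_d -> bool) (X : Om -> {fset 'rV[R]_d}) (T : Om -> bool)
  (x : 'rV[R]_d)
  (mT : measurable [set w | T w])
  (mY : measurable [set w | phi_star h (X w)])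
  (mYU : measurable [set w | phi_star h (X w `|` [fset x])%fset])
  (mYD : measurable [set w | phi_star h (X w `\ x)%fset])
  (indep : indep_bag_event P X [set w | T w])
  (T_pos : 0 < pr P [set w | T w]) (T_lt1 : pr P [set w | T w] < 1) :
  tau P h X T x =
    pr P [set w | ~~ phi_star h (X w)] *
      condE01 P (Ystar h X T x) ([set w | ~~ phi_star h (X w)] `&` [set w | T w])
    + pr P (c_event h X x).
Proof.
set T1 := [set w | T w].
set Y := [set w | phi_star h (X w)].
set Yu := [set w | phi_star h (X w `|` [fset x])%fset].
set Yd := [set w | phi_star h (X w `\ x)%fset].
have eNY : [set w | ~~ phi_star h (X w)] = ~` Y.
  by apply/seteqP; split=> v /=; unfold Y, T1, Yu, Yd; simpl; case: (phi_star _ _) => //.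
have eNT : [set w | ~~ T w] = ~` T1.
  by apply/seteqP; split=> v /=; unfold Y, T1, Yu, Yd; simpl; case: (T v).
have E1 : T1 `&` [set w | Ystar h X T x w] = Yu `&` T1.
  by apply/seteqP; split=> v /=; unfold Y, T1, Yu, Yd; simpl; rewrite /Ystar; case: (T v) => -[].
have E0 : ~` T1 `&` [set w | Ystar h X T x w] = Yd `&` ~` T1.
  apply/seteqP; split=> v /=; unfold Y, T1, Yu, Yd; simpl; rewrite /Ystar /=; case: (T v) => -[] //.
have E2 : (~` Y `&` T1) `&` [set w | Ystar h X T x w] = (~` Y `&` Yu) `&` T1.
  apply/seteqP; split=> v /=; unfold Y, T1, Yu, Yd; simpl; rewrite /Ystar /=; case: (T v) => -[] [] //.
have Ec : c_event h X x = Y `&` ~` Yd.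
  apply/seteqP; split=> v /=; unfold Y, T1, Yu, Yd; simpl.
    move=> [xX hx hz]; split.
      by apply/hasP; exists x.
    move=> /hasP [z]; rewrite in_fsetD1 => /andP [zx zX] hzz.
    by move: (hz z zX zx); rewrite hzz.
  move=> [/hasP [z zX hzz] nYd].
  have zx : z = x.
    case: (eqVneq z x) => // zx; exfalso; apply: nYd; apply/hasP; exists z => //.
    by rewrite in_fsetD1 zx.
  subst z; split => // z0 zX0 zx0; apply/negP => hz; apply: nYd; apply/hasP.
  by exists z0 => //; rewrite in_fsetD1 zx0.
have sYdY : Yd `<=` Y.
  move=> w; apply: phi_mono; exact: fsubsetDl.
have sYYu : Y `<=` Yu.
  move=> w; apply: phi_mono; exact: fsubsetUl.
have mNY := measurableC mY.
have mNT := measurableC mT.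
have iU : pr P (Yu `&` T1) = pr P Yu * pr P T1.
  apply: pr_indep => //.
  exact: (indep [set B | phi_star h (B `|` [fset x])%fset] mYU).
have iD : pr P (Yd `&` T1) = pr P Yd * pr P T1.
  apply: pr_indep => //.
  exact: (indep [set B | phi_star h (B `\ x)%fset] mYD).
have iNY : pr P (~` Y `&` T1) = pr P (~` Y) * pr P T1.
  apply: pr_indep => //.
  exact: (indep [set B | ~ phi_star h B] mNY).
have mNYU : measurable (~` Y `&` Yu) by exact: measurableI.
have iNYU : pr P ((~` Y `&` Yu) `&` T1) = pr P (~` Y `&` Yu) * pr P T1.
  apply: pr_indep => //.
  exact: (indep [set B | ~ phi_star h B /\ phi_star h (B `|` [fset x])%fset] mNYU).
have iDc : pr P (Yd `&` ~` T1) = pr P Yd * (1 - pr P T1).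
  have E := pr_split P mYD mT; rewrite iD in E; rewrite mulrBr mulr1; lra.
have pNT : pr P (~` T1) = 1 - pr P T1.
  have E := pr_split P measurableT mT; rewrite !setTI pr_setT in E; lra.
rewrite /tau /condE01 eNY eNT E1 E0 E2 Ec iU iDc pNT iNYU iNY.
have hT : pr P T1 != 0 by rewrite gt_eqF.
have hT' : 1 - pr P T1 != 0 by rewrite subr_eq0 eq_sym lt_eqF.
have -> : pr P Yu * pr P T1 / pr P T1 = pr P Yu by field.
have -> : pr P Yd * (1 - pr P T1) / (1 - pr P T1) = pr P Yd by field.
have -> : pr P (~` Y) * (pr P (~` Y `&` Yu) * pr P T1 / (pr P (~` Y) * pr P T1))
    = pr P (~` Y `&` Yu).
  have [E0'|hY] := eqVneq (pr P (~` Y)) 0.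
    rewrite E0'; move: (pr_split P mNY mYU) => /esym.
    have := pr_ge0 P (~` Y `&` Yu); have := pr_ge0 P (~` Y `&` ~` Yu).
    by move=> a b c; rewrite mul0r; lra.
  by field; apply/andP.
have sU : pr P Yu = pr P (Y `&` Yu) + pr P (~` Y `&` Yu).
  by rewrite (pr_split P mYU mY) (setIC Yu Y) (setIC Yu (~` Y)).
have sY : pr P Y = pr P (Y `&` Yd) + pr P (Y `&` ~` Yd) := pr_split P mY mYD.
have eYd : Y `&` Yd = Yd by apply/setIidr.
have eYu : Y `&` Yu = Y by apply/setIidl.
rewrite eYd in sY; rewrite eYu in sU.
lra.
Qed.
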